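(* If $G$ is a graph with no isolated vertices, then $\gamma_{\rm gr}^t(G) \ge 2\nu_{ss}(G)$.
   Context: All graphs are finite, simple, without isolated vertices. For a matching $M$ of $G$, let $V(M)$ be the set of vertices incident to edges of $M$; a vertex of $V(M)$ is strong if it has degree $1$ in the induced subgraph $G[V(M)]$. $M$ is a semistrong matching if every edge of $M$ has at least one strong endpoint; $\nu_{ss}(G)$ is the maximum number of edges in a semistrong matching of $G$. $N(v)$ denotes the open neighborhood of $v$. A sequence $S=(v_1,\ldots,v_k)$ of distinct vertices is a legal sequence if $N(v_i)\setminus \bigcup_{j=1}^{i-1} N(v_j)\neq\emptyset$ for every $i\in\{2,\ldots,k\}$, and a total dominating sequence if moreover $\{v_1,\ldots,v_k\}$ is a total dominating set of $G$. $\gamma_{\rm gr}^t(G)$ is the maximum length of a total dominating sequence of $G$. *)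

(* Defs.v *)
From mathcomp Require Import all_boot.
Set Implicit Arguments. Unset Strict Implicit. Unset Printing Implicit Defensive.

Definition simple_graph (T : finType) (e : rel T) : Prop :=
  symmetric e /\ irreflexive e.

Definition no_isolated (T : finType) (e : rel T) : Prop :=
  forall v : T, exists u : T, e v u.

Section G.
Variables (T : finType) (e : rel T).

Definition N (v : T) : {set T} := [set u | e v u].

(* A matching is a sequence of edges (x, y) (each unordered edge listed once,
   oriented arbitrarily) whose endpoints are pairwise distinct. *)
Definition VM (M : seq (T * T)) : seq T := flatten [seq [:: p.1; p.2] | p <- M].

Definition is_matching (M : seq (T * T)) : bool :=
  all (fun p => e p.1 p.2) M && uniq (VM M).

Definition degM (M : seq (T * T)) (v : T) : nat :=
  #|[set u | (u \in VM M) && e v u]|.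

Definition strong (M : seq (T * T)) (v : T) : bool := (v \in VM M) && (degM M v == 1).

Definition semistrong (M : seq (T * T)) : bool :=
  is_matching M && all (fun p => strong M p.1 || strong M p.2) M.

Definition nu_ss : nat :=
  \max_(k < #|T|.+1 | [exists M : k.-tuple (T * T), semistrong M]) k.

Definition legal (s : seq T) : bool :=
  uniq s &&
  [forall x0 : T, forall i : 'I_(size s),
     (0 < i) ==>
     (N (nth x0 s i) :\: \bigcup_(j < i) N (nth x0 s j) != set0)].
  (* x0 is only a default for nth; all indices used are < size s *)

Definition total_dominating (S : seq T) : bool :=
  [forall v : T, exists u : T, (u \in S) && e v u].

Definition tds (s : seq T) : bool := legal s && total_dominating s.

Definition gamma_gr_t : nat :=
  \max_(n < #|T|.+1 | [exists s : n.-tuple T, tds s]) n.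

End G.

(* Main.v *)
Require Import Defs.
From mathcomp Require Import all_boot.
From mathcomp Require Import zify.
Set Implicit Arguments. Unset Strict Implicit.
Section S.
Variable (T : finType) (e : rel T).
Lemma legalP (s : seq T) :
  legal e s <-> uniq s /\ (forall x0 i, 0 < i < size s -> exists w, e (nth x0 s i) w /\
      forall j, j < i -> ~~ e (nth x0 s j) w).
Proof.
split.
- case/andP=> U /forallP H; split=> // x0 i /andP[i0 iS].
  have /forall_inP := H x0 => /(_ (Ordinal iS) i0) /set0Pn [w].
  rewrite !inE => /andP[Hn Hw]; exists w; split=> // j ji.
  apply/negP => ejw; case/negP: Hn; apply/bigcupP.
  by exists (Ordinal ji) => //; rewrite inE.
- case=> U H; apply/andP; split=> //; apply/forallP=> x0; apply/forall_inP=> i i0.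
  have [w [ew Hw]] := H x0 i (introT andP (conj i0 (ltn_ord i))).
  apply/set0Pn; exists w; rewrite !inE ew andbT.
  apply/bigcupP=> -[j _]; rewrite inE; apply/negP; exact: Hw (ltn_ord j).
Qed.

Lemma strong_uniq M x u v : strong e M x -> u \in VM M -> v \in VM M ->
  e x u -> e x v -> u = v.
Proof.
case/andP=> _ /cards1P [z Hz] uM vM eu ev.
have : u \in [set u | (u \in VM M) && e x u] by rewrite inE uM eu.
have : v \in [set u | (u \in VM M) && e x u] by rewrite inE vM ev.
by rewrite Hz !inE => /eqP -> /eqP ->.
Qed.

Lemma step (s : seq T) : symmetric e -> no_isolated e -> legal e s ->
  ~~ total_dominating e s -> exists u, legal e (rcons s u).
Proof.
move=> sym noi Ls /forallPn [v /existsPn Hv].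
have [u evu] := noi v.
have uS : u \notin s by apply/negP=> us; have := Hv u; rewrite us evu.
exists u; case/legalP: Ls => U H; apply/legalP; split.
  by rewrite rcons_uniq uS U.
move=> x0 i /andP[i0]; rewrite size_rcons ltnS leq_eqVlt => /orP[/eqP ->|iS].
- exists v; rewrite nth_rcons ltnn eqxx sym evu; split=> // j js.
  rewrite nth_rcons js; apply/negP=> ejv.
  by have := Hv (nth x0 s j); rewrite mem_nth // sym ejv.
- have [w [ew Hw]] := H x0 i (introT andP (conj i0 iS)).
  exists w; rewrite nth_rcons iS; split=> // j ji.
  by rewrite nth_rcons (ltn_trans ji iS); apply: Hw.
Qed.

Lemma extend (s : seq T) : symmetric e -> no_isolated e -> legal e s ->
  exists s', tds e s' /\ size s <= size s'.
Proof.
move=> sym noi.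
move: {2}(#|T| - size s) (leqnn (#|T| - size s)) => n.
elim: n s => [|n IH] s Hn Ls.
- case TD: (total_dominating e s).
    by exists s; rewrite /tds Ls TD.
  have [u Lu] := step sym noi Ls (negbT TD).
  have : size (rcons s u) <= #|T|.
    by case/andP: Lu => U _; rewrite -(card_uniqP U) max_card.
  by rewrite size_rcons -subn_gt0; move: Hn; rewrite leqn0 => /eqP ->.
- case TD: (total_dominating e s).
    by exists s; rewrite /tds Ls TD.
  have [u Lu] := step sym noi Ls (negbT TD).
  have sz : size (rcons s u) <= #|T|.
    by case/andP: Lu => U _; rewrite -(card_uniqP U) max_card.
  have H2 : #|T| - size (rcons s u) <= n.
    by rewrite size_rcons in sz *; move: Hn sz; lia.
  have [s' [Ts' Hs']] := IH (rcons s u) H2 Lu.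
  by exists s'; split; [done| apply: leq_trans Hs'; rewrite size_rcons leqnSn].
Qed.

Lemma perm_VM (f g : T*T -> T) (M : seq (T*T)) :
  (forall p, (f p = p.1 /\ g p = p.2) \/ (f p = p.2 /\ g p = p.1)) ->
  perm_eq (map f M ++ map g M) (VM M).
Proof.
move=> H; elim: M => [|p M IH] //=.
rewrite /VM /= -/(VM M).
have P1 : perm_eq (map f M ++ [:: g p] ++ map g M) (g p :: (map f M ++ map g M)).
  by rewrite perm_catCA.
apply: perm_trans (_ : perm_eq _ (f p :: g p :: (map f M ++ map g M))) _.
  by rewrite perm_cons.
case: (H p) => -[-> ->]; first by rewrite !perm_cons.
have P2 : perm_eq ([:: p.2] ++ [:: p.1] ++ VM M) ([:: p.1] ++ [:: p.2] ++ VM M).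
  by rewrite perm_catCA.
apply: perm_trans P2; by rewrite /= !perm_cons.
Qed.

Lemma core (M : seq (T*T)) : symmetric e -> semistrong e M ->
  exists s, legal e s /\ size s = 2 * size M.
Proof.
move=> sym /andP[/andP[Ed UM] St].
pose f p := if strong e M p.1 then p.1 else p.2.
pose g p := if strong e M p.1 then p.2 else p.1.
pose xs := map f M; pose ys := map g M.
have HP : perm_eq (xs ++ ys) (VM M).
  apply: perm_VM => p; rewrite /f /g; case: (strong e M p.1); by [left|right].
have U : uniq (xs ++ ys) by rewrite (perm_uniq HP).
have inVM x : x \in xs ++ ys -> x \in VM M by rewrite (perm_mem HP).
have Efg p : p \in M -> e (f p) (g p).
  move=> pM; have := allP Ed p pM; rewrite /f /g; case: (strong e M p.1) => //.
  by rewrite sym.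
have Sf p : p \in M -> strong e M (f p).
  move=> pM; have := allP St p pM; rewrite /f; case: ifP => //= ->.
exists (xs ++ ys); split; last by rewrite size_cat !size_map mul2n addnn.
move: U; rewrite cat_uniq => /and3P[Ux Dxy Uy].
have Ux' : uniq (xs ++ ys) by rewrite cat_uniq Ux Dxy Uy.
apply/legalP; split=> // x0 i.
pose p0 := (x0, x0).
have sx : size xs = size M by rewrite size_map.
have sy : size ys = size M by rewrite size_map.
have Xi j : j < size M -> nth x0 xs j = f (nth p0 M j) by move=> jk; rewrite (nth_map p0).
have Yi j : j < size M -> nth x0 ys j = g (nth p0 M j) by move=> jk; rewrite (nth_map p0).
have XY j : j < size M -> e (nth x0 xs j) (nth x0 ys j).
  by move=> jk; rewrite Xi // Yi //; apply: Efg; rewrite mem_nth.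
have XS j : j < size M -> strong e M (nth x0 xs j).
  by move=> jk; rewrite Xi //; apply: Sf; rewrite mem_nth.
have XV j : j < size M -> nth x0 xs j \in VM M.
  by move=> jk; apply: inVM; rewrite mem_cat mem_nth ?sx.
have YV j : j < size M -> nth x0 ys j \in VM M.
  by move=> jk; apply: inVM; rewrite mem_cat mem_nth ?sy ?orbT.
have key j l : j < size M -> l < size M -> e (nth x0 xs j) (nth x0 ys l) -> j = l.
  move=> jk lk ejl.
  have := strong_uniq (XS j jk) (YV j jk) (YV l lk) (XY j jk) ejl.
  by move/eqP; rewrite nth_uniq ?sy // => /eqP.
have neq j l : j < size M -> l < size M -> nth x0 xs j != nth x0 ys l.
  move=> jk lk; apply/eqP=> E.
  have := hasPn Dxy (nth x0 ys l); rewrite mem_nth ?sy // => /(_ isT).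
  by rewrite -E mem_nth ?sx.
have key2 j l : j < size M -> l < size M -> ~~ e (nth x0 xs j) (nth x0 xs l).
  move=> jk lk; apply/negP=> ejl.
  have := strong_uniq (XS j jk) (YV j jk) (XV l lk) (XY j jk) ejl.
  by move=> E; have := neq l j lk jk; rewrite E eqxx.
rewrite size_cat sx sy => /andP[i0 ik].
rewrite nth_cat sx.
case: ltnP => ik'.
- exists (nth x0 ys i); split; first exact: XY.
  move=> j ji; rewrite nth_cat sx (ltn_trans ji ik').
  by apply/negP=> /(key _ _ (ltn_trans ji ik') ik') E; rewrite E ltnn in ji.
- have i'k : i - size M < size M by move: ik ik'; lia.
  exists (nth x0 xs (i - size M)); split; first by rewrite sym; exact: XY.
  move=> j ji; rewrite nth_cat sx; case: ltnP => jk.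
    exact: key2.
  have j'k : j - size M < i - size M by move: ji jk; lia.
  rewrite sym; apply/negP=> /(key _ _ i'k (ltn_trans j'k i'k)) E.
  by rewrite E ltnn in j'k.
Qed.
End S.

Theorem mainTheorem6 (T : finType) (e : rel T) :
  simple_graph e -> no_isolated e -> 2 * nu_ss e <= gamma_gr_t e.
Proof.
move=> [sym irr] noi; rewrite /nu_ss.
apply: (big_ind (fun x => 2 * x <= gamma_gr_t e)) => //.
  by move=> x y; lia.
move=> k /existsP [M SM].
have [s [Ls sz]] := core sym SM.
have [s' [Ts Hs]] := extend sym noi Ls.
rewrite size_tuple in sz.
apply: (leq_trans _ (_ : size s' <= _)); first by rewrite -sz.
have szT : size s' < #|T|.+1.
  by case/andP: Ts => /andP[U _] _; rewrite ltnS -(card_uniqP U) max_card.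
rewrite /gamma_gr_t.
apply: (leq_bigmax_cond (Ordinal szT)).
by apply/existsP; exists (in_tuple s').
Qed.
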